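(* Let $\mathcal{X}$ and $\mathcal{Y}$ be finite sets, let $n\ge 1$ and $k\ge 0$ be integers, and let $P_{\mathbf{y}|\mathbf{x}}$ be a channel from $\mathcal{X}^n$ to $\mathcal{Y}^n$. Let $P_{\mathbf{x}}$ be an arbitrary probability distribution on $\mathcal{X}^n$ and let $\Delta\in\mathbb{N}_0=\{0,1,2,\dots\}$. Then there exists an $(n,k,\epsilon_{\mathsf T},\epsilon_{\mathsf U})$-code for $P_{\mathbf{y}|\mathbf{x}}$ satisfying simultaneously $$\epsilon_{\mathsf T}\le \mathrm{RCU}(k+\Delta,n)\qquad\text{and}\qquad \epsilon_{\mathsf U}\le \mathrm{RCU}(k+\Delta,n)\,2^{-\Delta},$$ where, for an integer $j\ge 0$, $$\mathrm{RCU}(j,n)=\mathbb{E}\Big[\min\Big\{1,\,(2^{j}-1)\,\Pr\big[P_{\mathbf{y}|\mathbf{x}}(\mathbf{y}|\bar{\mathbf{x}})\ge P_{\mathbf{y}|\mathbf{x}}(\mathbf{y}|\mathbf{x})\,\big|\,\mathbf{x},\mathbf{y}\big]\Big\}\Big],$$ with $(\mathbf{x},\mathbf{y},\bar{\mathbf{x}})$ jointly distributed as $P_{\mathbf{x},\mathbf{y},\bar{\mathbf{x}}}(\mathbf{x},\mathbf{y},\bar{\mathbf{x}})=P_{\mathbf{x}}(\mathbf{x})\,P_{\mathbf{y}|\mathbf{x}}(\mathbf{y}|\mathbf{x})\,P_{\mathbf{x}}(\bar{\mathbf{x}})$ (the outer expectation is over $(\mathbf{x},\mathbf{y})$).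
   Context: A channel from $\mathcal{X}^n$ to $\mathcal{Y}^n$ is a conditional probability mass function $P_{\mathbf{y}|\mathbf{x}}(\mathbf{y}|\mathbf{x})$, $\mathbf{x}\in\mathcal{X}^n$, $\mathbf{y}\in\mathcal{Y}^n$. (The paper notes the same statement applies to continuous alphabets with conditional densities in place of pmfs.) Definition ($(n,k,\epsilon_{\mathsf T},\epsilon_{\mathsf U})$-code). An $(n,k,\epsilon_{\mathsf T},\epsilon_{\mathsf U})$-code for the channel $P_{\mathbf{y}|\mathbf{x}}$ consists of: (i) a discrete random variable $u$ with distribution $P_u$ on a set $\mathcal{U}$ with $|\mathcal{U}|\le 2$, known to both transmitter and receiver (common randomness); (ii) an encoder $\phi:\mathcal{U}\times\{1,\dots,2^k\}\to\mathcal{X}^n$; (iii) an erasure decoder $g:\mathcal{U}\times\mathcal{Y}^n\to\{0,1,\dots,2^k\}$, where output $0$ denotes an erasure. For each $u$ and $\hat w\in\{0,1,\dots,2^k\}$ let $\mathcal{D}_{u,\hat w}=\{\mathbf{y}: g(u,\mathbf{y})=\hat w\}$ (these partition $\mathcal{Y}^n$). The message $w$ is uniform on $\{1,\dots,2^k\}$ and independent of $u$, and given $u$ and $w=m$ the output $\mathbf{y}$ has law $P_{\mathbf{y}|\mathbf{x}}(\cdot\,|\,\phi(u,m))$. It is required that the total error probability and undetected error probability satisfy $$\frac{1}{2^k}\sum_{m=1}^{2^k}\sum_{\substack{m'=0\\ m'\ne m}}^{2^k}\Pr[\mathbf{y}\in\mathcal{D}_{u,m'}\mid w=m]\le\epsilon_{\mathsf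 T},\qquad \frac{1}{2^k}\sum_{m=1}^{2^k}\sum_{\substack{m'=1\\ m'\ne m}}^{2^k}\Pr[\mathbf{y}\in\mathcal{D}_{u,m'}\mid w=m]\le\epsilon_{\mathsf U},$$ where probabilities are over the pair $(u,\mathbf{y})$. *)

(* Defs.v *)
From HB Require Import structures.
From mathcomp Require Import all_boot all_order all_algebra.
From mathcomp Require Import reals.
Set Implicit Arguments. Unset Strict Implicit. Unset Printing Implicit Defensive.
Import Order.TTheory GRing.Theory Num.Theory.
Local Open Scope ring_scope.

Definition word (X : finType) (n : nat) := {ffun 'I_n -> X}.

Definition is_pmf (R : realType) (T : finType) (p : T -> R) : Prop :=
  (forall t, 0 <= p t) /\ \sum_(t : T) p t = 1.

Definition is_channel (R : realType) (A B : finType) (W : A -> B -> R) : Prop :=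
  forall a, is_pmf (W a).

(* Messages {1,..,2^k} are represented by 'I_(2^k); decoder output
   {0,1,..,2^k} by option 'I_(2^k), with None = erasure (0). *)

Definition total_err (R : realType) (X Y U : finType) (n k : nat)
  (W : word X n -> word Y n -> R) (Pu : U -> R)
  (phi : U -> 'I_(2 ^ k) -> word X n)
  (g : U -> word Y n -> option 'I_(2 ^ k)) : R :=
  ((2 ^ k)%:R)^-1 *
  \sum_(m : 'I_(2 ^ k)) \sum_(m' : option 'I_(2 ^ k) | m' != Some m)
     \sum_(u : U) Pu u * \sum_(y : word Y n | g u y == m') W (phi u m) y.

Definition undet_err (R : realType) (X Y U : finType) (n k : nat)
  (W : word X n -> word Y n -> R) (Pu : U -> R)
  (phi : U -> 'I_(2 ^ k) -> word X n)
  (g : U -> word Y n -> option 'I_(2 ^ k)) : R :=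
  ((2 ^ k)%:R)^-1 *
  \sum_(m : 'I_(2 ^ k)) \sum_(m' : 'I_(2 ^ k) | m' != m)
     \sum_(u : U) Pu u * \sum_(y : word Y n | g u y == Some m') W (phi u m) y.

Definition is_code (R : realType) (X Y : finType) (n k : nat)
  (W : word X n -> word Y n -> R) (eT eU : R) : Prop :=
  exists U : finType, (#|U| <= 2)%N /\
  exists Pu : U -> R, is_pmf Pu /\
  exists (phi : U -> 'I_(2 ^ k) -> word X n)
         (g : U -> word Y n -> option 'I_(2 ^ k)),
    total_err W Pu phi g <= eT /\ undet_err W Pu phi g <= eU.

Definition RCU (R : realType) (X Y : finType) (n : nat)
  (W : word X n -> word Y n -> R) (Px : word X n -> R) (j : nat) : R :=
  \sum_(x : word X n) \sum_(y : word Y n)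
    Px x * W x y *
    Num.min 1 (((2 ^ j)%:R - 1) *
               \sum_(xb : word X n | W x y <= W xb y) Px xb).

(* Main.v *)
Require Import Defs.
From HB Require Import structures.
From mathcomp Require Import all_boot all_order all_algebra.
From mathcomp Require Import reals.
From mathcomp Require Import ring lra.
Import Order.TTheory GRing.Theory Num.Theory.
Local Open Scope ring_scope.

Lemma prod_ind (R : realType) (I : finType) (P : pred I) (b : I -> bool) :
  \prod_(j | P j) ((b j)%:R : R) = ([forall j, P j ==> b j])%:R.
Proof.
case: forallP => H.
  by apply: big1 => j Pj; rewrite (implyP (H j) Pj).
have [j Hj] : exists j, ~~ (P j ==> b j).
  apply/existsP; apply: contraT; rewrite negb_exists => /forallP Hn.
  by exfalso; apply: H => j; move: (Hn j); rewrite negbK.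
move: Hj; rewrite negb_imply => /andP[Pj bj].
by rewrite (bigD1 j) //= (negbTE bj) mul0r.
Qed.

Lemma bern (R : realType) (s : R) (p : nat) : 0 <= s <= 1 ->
  1 - s ^+ p <= p%:R * (1 - s).
Proof.
move=> /andP[s0 s1]; elim: p => [|p IH]; first by rewrite expr0 subrr mul0r.
rewrite exprS -natr1.
have h : 0 <= s ^+ p <= 1 by rewrite exprn_ge0 // exprn_ile1.
move/andP: h => [h0 h1].
have : s ^+ p * (1 - s) <= 1 - s by rewrite ler_piMl // subr_ge0.
nra.
Qed.

Section Code.
Variables (R : realType) (X Y : finType) (n N : nat).
Variables (W : word X n -> word Y n -> R) (Px : word X n -> R).
Hypothesis Wch : is_channel W.
Hypothesis Pxp : is_pmf Px.

Definition cb := {ffun 'I_N -> word X n}.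
Definition wgt (c : cb) : R := \prod_i Px (c i).
Definition wins (c : cb) (y : word Y n) (i : 'I_N) : bool :=
  [forall j, (j != i) ==> (W (c j) y < W (c i) y)].
Definition sfun x0 y := \sum_x Px x * (W x y < W x0 y)%R%:R.
Definition tfun x1 y := \sum_x Px x * ((W x y < W x1 y)%R%:R * W x y).

Lemma expect_prod (G : 'I_N -> word X n -> R) :
  \sum_(c : cb) \prod_j G j (c j) = \prod_j \sum_x G j x.
Proof. by rewrite bigA_distr_bigA. Qed.

Lemma sum_wgt : \sum_(c : cb) wgt c = 1.
Proof.
rewrite /wgt (expect_prod (fun _ x => Px x)); apply: big1 => j _; exact: Pxp.2.
Qed.

Lemma wgt_ge0 c : 0 <= wgt c.
Proof. by apply: prodr_ge0 => i _; apply: Pxp.1. Qed.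

Lemma card_C1 (i : 'I_N) : #|[pred j | j != i]| = N.-1.
Proof. by have := cardC1 i; rewrite card_ord => <-; apply: eq_card. Qed.

Lemma E1 y i : \sum_(c : cb) wgt c * ((wins c y i)%:R * W (c i) y)
   = \sum_x0 Px x0 * W x0 y * sfun x0 y ^+ N.-1.
Proof.
pose G x0 (j : 'I_N) x := Px x * (if j == i then (x == x0)%:R * W x y
                                  else (W x y < W x0 y)%R%:R).
transitivity (\sum_(c : cb) \sum_x0 \prod_j G x0 j (c j)).
  apply: eq_bigr => c _.
  rewrite (bigD1 (c i)) //= [X in _ + X]big1 ?addr0; last first.
    move=> x0 /negbTE ne; rewrite (bigD1 i) //= /G eqxx eq_sym ne mul0r mulr0.
    by rewrite mul0r.
  rewrite /G big_split /= [X in _ = _ * X](bigD1 i) //= !eqxx mul1r.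
  rewrite /wgt; congr (_ * _); rewrite mulrC; congr (_ * _).
  rewrite /wins -prod_ind; apply: eq_bigr => j /negbTE ->.
  by [].
rewrite exchange_big /=; apply: eq_bigr => x0 _.
rewrite expect_prod (bigD1 i) //=.
congr (_ * _).
  rewrite (bigD1 x0) //= [X in _ + X]big1 ?addr0 /G ?eqxx.
    by rewrite /= mulr1n mul1r.
  by move=> x /negbTE ne; rewrite ne mul0r mulr0.
rewrite -(card_C1 i) -prodr_const; apply: eq_bigr => j /negbTE ne.
by rewrite /G ne.
Qed.
Lemma card_C2 (i i' : 'I_N) : i != i' ->
  #|[pred j | (j != i') && (j != i)]| = N.-2.
Proof.
move=> ne.
have := cardD1 i [pred j | j != i']; rewrite card_C1 inE ne.
move=> h; transitivity (N.-1.-1); last by [].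
rewrite h /= add0n; apply: eq_card => j; rewrite !inE andbC.
by [].
Qed.

Lemma E2 y (i i' : 'I_N) : i != i' ->
  \sum_(c : cb) wgt c * ((wins c y i')%:R * W (c i) y)
   = \sum_x1 Px x1 * tfun x1 y * sfun x1 y ^+ N.-2.
Proof.
move=> ne.
pose G x1 (j : 'I_N) x := Px x * ((if j == i' then (x == x1)%:R
                                  else (W x y < W x1 y)%R%:R) *
                                  (if j == i then W x y else 1)).
transitivity (\sum_(c : cb) \sum_x1 \prod_j G x1 j (c j)).
  apply: eq_bigr => c _.
  rewrite (bigD1 (c i')) //= [X in _ + X]big1 ?addr0; last first.
    move=> x1 /negbTE ne1; rewrite (bigD1 i') //= /G eqxx eq_sym ne1 mul0r.
    by rewrite mulr0 mul0r.
  rewrite /G big_split /= big_split /= /wgt; congr (_ * _).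
  congr (_ * _).
    rewrite (bigD1 i') //= !eqxx /= mulr1n mul1r.
    rewrite /wins -prod_ind; apply: eq_bigr => j /negbTE ->.
    by [].
  rewrite (bigD1 i) //= eqxx big1 ?mulr1 // => j /negbTE ->.
  by [].
rewrite exchange_big /=; apply: eq_bigr => x1 _.
rewrite expect_prod (bigD1 i') //= (bigD1 i) /=; last by rewrite /= ne.
rewrite mulrA; congr (_ * _ * _).
- rewrite (bigD1 x1) //= [X in _ + X]big1 ?addr0 /G ?eqxx.
    by rewrite /= eq_sym (negbTE ne) mulr1 mulr1n mulr1.
  by move=> x /negbTE ne1; rewrite ne1 mul0r mulr0.
- by rewrite /G (negbTE ne) eqxx.
rewrite -(@card_C2 i i' ne) -prodr_const; apply: eq_bigr => j /andP[/negbTE n1 /negbTE n2].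
by rewrite /G n1 n2 /sfun; apply: eq_bigr => x _; rewrite mulr1.
Qed.

Lemma sum_part (T U : finType) (g : U -> T) (P : pred T) (F : U -> R) :
  \sum_(t | P t) \sum_(y | g y == t) F y = \sum_(y | P (g y)) F y.
Proof.
rewrite (partition_big g P) //; apply: eq_bigr => t Pt.
by apply: eq_bigl => y; case: eqP => [->|]; rewrite ?Pt ?andbF.
Qed.

Lemma sum_ind (U : finType) (P : pred U) (F : U -> R) :
  \sum_(y | P y) F y = \sum_y (P y)%:R * F y.
Proof.
rewrite big_mkcond; apply: eq_bigr => y _; case: (P y) => /=.
  by rewrite mul1r. by rewrite mul0r.
Qed.

Variables (K : nat) (KN : (K <= N)%N).
Definition wid (m : 'I_K) : 'I_N := widen_ord KN m.
Definition gdec (c : cb) (y : word Y n) : option 'I_K :=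
  [pick m : 'I_K | wins c y (wid m)].

Lemma wins_uniq c y i j : wins c y i -> wins c y j -> i = j.
Proof.
move=> /forallP Hi /forallP Hj; apply/eqP; apply: contraT => ne.
have h1 := implyP (Hi j); rewrite eq_sym ne in h1.
have h2 := implyP (Hj i); rewrite ne in h2.
have := h1 isT; have := h2 isT; move=> a b.
by have := lt_trans a b; rewrite ltxx.
Qed.

Arguments wins_uniq {c y i j}.

Lemma gdec_eq c y m : (gdec c y == Some m) = wins c y (wid m).
Proof.
rewrite /gdec; case: pickP => [m0 Hm0|H].
  apply/eqP/idP => [[<-] //|Hm].
  congr Some; have := wins_uniq Hm0 Hm; move/(congr1 val) => /= e.
  by apply/val_inj.
by rewrite H.
Qed.

Lemma sum_wins_le1 c y : \sum_i ((wins c y i)%:R : R) <= 1.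
Proof.
case: (pickP (wins c y)) => [i Hi|H].
  rewrite (bigD1 i) //= Hi big1 ?addr0 //.
  move=> j ne; case Hj: (wins c y j) => //.
  by move: ne; rewrite (wins_uniq Hj Hi) eqxx.
by rewrite big1 // => i _; rewrite H.
Qed.

Definition Ttot (phi : 'I_K -> word X n) (g : word Y n -> option 'I_K) : R :=
  (K%:R)^-1 * \sum_(m : 'I_K) \sum_(m' : option 'I_K | m' != Some m)
     \sum_(y | g y == m') W (phi m) y.
Definition Utot (phi : 'I_K -> word X n) (g : word Y n -> option 'I_K) : R :=
  (K%:R)^-1 * \sum_(m : 'I_K) \sum_(m' : 'I_K | m' != m)
     \sum_(y | g y == Some m') W (phi m) y.

Definition Tdet (c : cb) := Ttot (fun m => c (wid m)) (gdec c).
Definition Udet (c : cb) := Utot (fun m => c (wid m)) (gdec c).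

Lemma Tdet_eq c : Tdet c = (K%:R)^-1 * \sum_m
   (1 - \sum_y (wins c y (wid m))%:R * W (c (wid m)) y).
Proof.
rewrite /Tdet /Ttot; congr (_ * _); apply: eq_bigr => m _.
rewrite (@sum_part _ _ (gdec c) (fun m' => m' != Some m)) sum_ind.
rewrite -[X in X - _](Wch (c (wid m))).2 -sumrB; apply: eq_bigr => y _.
by rewrite -gdec_eq; case: (gdec c y == Some m) => /=; rewrite ?mul0r ?mul1r ?subrr ?subr0.
Qed.

Lemma Udet_eq c : Udet c = (K%:R)^-1 * \sum_m \sum_(m' | m' != m)
   \sum_y (wins c y (wid m'))%:R * W (c (wid m)) y.
Proof.
rewrite /Udet /Utot; congr (_ * _); apply: eq_bigr => m _.
apply: eq_bigr => m' _; rewrite sum_ind; apply: eq_bigr => y _.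
by rewrite gdec_eq.
Qed.

Definition Qy y := \sum_x0 Px x0 * W x0 y * sfun x0 y ^+ N.-1.
Definition Vy y := \sum_x1 Px x1 * tfun x1 y * sfun x1 y ^+ N.-2.

Hypothesis Kpos : (0 < K)%N.

Lemma ET : \sum_c wgt c * Tdet c = 1 - \sum_y Qy y.
Proof.
have Kn0 : (K%:R : R) != 0 by rewrite pnatr_eq0 -lt0n.
under eq_bigr do rewrite Tdet_eq mulrCA mulr_sumr.
rewrite -mulr_sumr exchange_big /=.
rewrite (eq_bigr (fun _ => 1 - \sum_y Qy y)); last first.
  move=> m _; under eq_bigr do rewrite mulrBr mulr1 mulr_sumr.
  rewrite sumrB sum_wgt exchange_big /=; congr (_ - _).
  by apply: eq_bigr => y _; rewrite /Qy -(E1 y (wid m)).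
by rewrite sumr_const card_ord; apply: (mulfI Kn0); rewrite mulrA mulfV // mul1r mulr_natl.
Qed.

Lemma EU : \sum_c wgt c * Udet c = (K%:R - 1) * \sum_y Vy y.
Proof.
have Kn0 : (K%:R : R) != 0 by rewrite pnatr_eq0 -lt0n.
under eq_bigr do rewrite Udet_eq mulrCA mulr_sumr.
rewrite -mulr_sumr exchange_big /=.
rewrite (eq_bigr (fun m => (K%:R - 1) * \sum_y Vy y)); last first.
  move=> m _; under eq_bigr do rewrite mulr_sumr.
  rewrite exchange_big /=.
  rewrite (eq_bigr (fun _ => \sum_y Vy y)); last first.
    move=> m' ne; under eq_bigr do rewrite mulr_sumr.
    rewrite exchange_big /=; apply: eq_bigr => y _; rewrite /Vy -(@E2 y (wid m) (wid m')) //.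
    by apply: contra ne => /eqP /(congr1 val) /= e; apply/eqP/val_inj.
  apply: (@addrI _ (\sum_y Vy y)).
  have e : \sum_(m' : 'I_K) \sum_y Vy y = \sum_y Vy y + \sum_(m' | m' != m) \sum_y Vy y.
    by rewrite (bigD1 m).
  rewrite -e sumr_const card_ord.
  by rewrite -[in LHS]mulr_natl; ring.
by rewrite sumr_const card_ord; apply: (mulfI Kn0); rewrite mulrA mulfV // mul1r mulr_natl.
Qed.

Lemma VQ_le : (N%:R - 1) * \sum_y Vy y + \sum_y Qy y <= 1.
Proof.
pose i0 := wid (Ordinal Kpos).
have Wge0 x y : 0 <= W x y by have := (Wch x).1 y.
have one : \sum_(c : cb) wgt c * \sum_y W (c i0) y = 1.
  by rewrite -[RHS]sum_wgt; apply: eq_bigr => c _; rewrite (Wch _).2 mulr1.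
rewrite -[X in _ <= X]one.
have -> : (N%:R - 1) * \sum_y Vy y + \sum_y Qy y =
   \sum_(c : cb) wgt c * \sum_y W (c i0) y * \sum_i (wins c y i)%:R.
  symmetry.
  transitivity (\sum_y \sum_i \sum_(c : cb) wgt c * ((wins c y i)%:R * W (c i0) y)).
    under eq_bigr do rewrite mulr_sumr.
    rewrite exchange_big /=; apply: eq_bigr => y _.
    rewrite exchange_big /=; apply: eq_bigr => c _.
    by rewrite !mulr_sumr; apply: eq_bigr => i _; ring.
  rewrite mulr_sumr -big_split /=; apply: eq_bigr => y _.
  rewrite (bigD1 i0) //= (E1 y i0) -/(Qy y) addrC; congr (_ + _).
  rewrite (eq_bigr (fun _ => Vy y)); last first.
    move=> i ne; rewrite (@E2 y i0 i) //; by rewrite eq_sym.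
  have e : \sum_(i : 'I_N) Vy y = Vy y + \sum_(i | i != i0) Vy y.
    by rewrite (bigD1 i0).
  apply: (@addrI _ (Vy y)); rewrite -e sumr_const card_ord.
  by rewrite -[in RHS]mulr_natl; ring.
apply: ler_sum => c _; apply: ler_wpM2l; first exact: wgt_ge0.
apply: ler_sum => y _.
by rewrite ler_piMr // sum_wins_le1.
Qed.

Lemma Vy_ge0 y : 0 <= Vy y.
Proof.
have Px0 := Pxp.1; have Wge0 x y' : 0 <= W x y' by have := (Wch x).1 y'.
apply: sumr_ge0 => x1 _; rewrite !mulr_ge0 //.
  by apply: sumr_ge0 => x _; rewrite !mulr_ge0.
by rewrite exprn_ge0 // sumr_ge0 // => x _; rewrite mulr_ge0.
Qed.

Lemma ET_RCU j : N = (2 ^ j)%N -> 1 - \sum_y Qy y <= RCU W Px j.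
Proof.
move=> eN.
have Px0 := Pxp.1; have Wge0 x y' : 0 <= W x y' by have := (Wch x).1 y'.
have one : \sum_x \sum_y Px x * W x y = 1.
  rewrite -[RHS]Pxp.2; apply: eq_bigr => x _.
  by rewrite -mulr_sumr (Wch x).2 mulr1.
rewrite -[X in X - _]one /Qy [X in _ - X]exchange_big /= -sumrB /RCU.
apply: ler_sum => x _; rewrite -sumrB; apply: ler_sum => y _.
rewrite -[X in X - _]mulr1 -mulrBr; apply: ler_wpM2l; first by rewrite mulr_ge0.
have qs : \sum_(xb | W x y <= W xb y) Px xb = 1 - sfun x y.
  have e : sfun x y = \sum_(xb | ~~ (W x y <= W xb y)) Px xb.
    rewrite /sfun [RHS]big_mkcond; apply: eq_bigr => xb _.
    by rewrite -ltNge; case: (W xb y < W x y)%R; rewrite ?mulr1 ?mulr0.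
  by rewrite e -Pxp.2 [X in X - _](bigID (fun xb => W x y <= W xb y)) /= addrK.
have s0 : 0 <= sfun x y by apply: sumr_ge0 => xb _; rewrite mulr_ge0.
have s1 : sfun x y <= 1.
  have : 0 <= \sum_(xb | W x y <= W xb y) Px xb by apply: sumr_ge0.
  by rewrite qs subr_ge0.
rewrite le_min; apply/andP; split.
  by rewrite lerBlDr lerDl exprn_ge0.
rewrite qs -eN.
have -> : (N%:R : R) - 1 = (N.-1)%:R.
  have Npos : (0 < N)%N by rewrite eN expn_gt0.
  by rewrite -{1}(prednK Npos) -natr1 addrK.
by apply: bern; rewrite s0 s1.
Qed.

End Code.

Lemma two_point (R : realType) (C : finType) (w x y : C -> R) :
  (forall c, 0 <= w c) -> \sum_c w c = 1 ->
  \sum_c w c * x c <= 0 -> \sum_c w c * y c <= 0 ->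
  exists c1 c2 (l : R), 0 <= l <= 1 /\
    l * x c1 + (1 - l) * x c2 <= 0 /\ l * y c1 + (1 - l) * y c2 <= 0.
Proof.
move=> w0 w1 Xle Yle.
have [c /andP[xc yc]|noQ] := pickP (fun c => (x c <= 0) && (y c <= 0)).
  by exists c, c, 1; rewrite subrr !mul0r !addr0 !mul1r ler01 lexx.
have noQ' c : (0 < x c) || (0 < y c).
  by rewrite !ltNge -negb_and noQ.
have [[p q] /= /andP[/andP[xp yq] H]|none] :=
   pickP (fun pq : C * C => (x pq.1 <= 0) && (y pq.2 <= 0) &&
                              (x pq.2 * y pq.1 <= x pq.1 * y pq.2)).
  have xq : 0 < x q by move: (noQ' q); rewrite [0 < y q]ltNge yq orbF.
  have yp : 0 < y p by move: (noQ' p); rewrite [0 < x p]ltNge xp.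
  have d0 : 0 < x q - x p by lra.
  exists p, q, (x q / (x q - x p)); split.
    apply/andP; split; first by apply: divr_ge0; lra.
    rewrite ler_pdivrMr // mul1r; lra.
  have dn0 : x q - x p != 0 by rewrite lt0r_neq0.
  split.
    have -> : x q / (x q - x p) * x p + (1 - x q / (x q - x p)) * x q = 0.
      by field.
    by [].
  have -> : x q / (x q - x p) * y p + (1 - x q / (x q - x p)) * y q
      = (x q * y p - x p * y q) / (x q - x p) by field.
  apply: mulr_le0_ge0; first lra.
  by rewrite invr_ge0 ltW.
exfalso.
have key q c : y q <= 0 -> 0 < y c -> 0 < x q * y c - x c * y q.
  move=> yq yc.
  have xq : 0 < x q by move: (noQ' q); rewrite [0 < y q]ltNge yq orbF.
  case: (lerP (x c) 0) => xc.
    move: (none (c, q)); rewrite /= xc yq /= => /negbT; rewrite -ltNge.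
    rewrite [x c * _]mulrC; lra.
  have : 0 < x q * y c by rewrite mulr_gt0.
  have : x c * y q <= 0 by rewrite mulr_ge0_le0 // ltW.
  lra.
have allz (F : C -> R) : (forall c, 0 <= F c) -> \sum_c F c <= 0 ->
    forall c, F c = 0.
  move=> F0 Fle c; apply: (psumr_eq0P (P := predT)) => // .
  by apply/le_anti; rewrite Fle sumr_ge0.
have [c0 wc0] : exists c, 0 < w c.
  case: (pickP (fun c => 0 < w c)) => [c Hc|Hn]; first by exists c.
  have : \sum_c w c = 0 by apply: big1 => c _; apply/le_anti; rewrite w0 andbT leNgt Hn.
  by rewrite w1 => /eqP; rewrite oner_eq0.
have sup_y : exists c, (0 < w c) && (0 < y c).
  case: (pickP (fun c => (0 < w c) && (0 < y c))) => [c Hc|Hn]; first by exists c.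
  have F0 c : 0 <= w c * x c.
    have := w0 c; rewrite le_eqVlt => /orP[/eqP <-|wc]; first by rewrite mul0r.
    move: (Hn c); rewrite /= wc /= => /negbT; rewrite -leNgt => yc.
    have : 0 < x c by move: (noQ' c); rewrite [0 < y c]ltNge yc orbF.
    by move=> xc; rewrite mulr_ge0 ?ltW.
  have := allz _ F0 Xle c0.
  have : 0 < x c0.
    move: (Hn c0); rewrite /= wc0 /= => /negbT; rewrite -leNgt => yc.
    by move: (noQ' c0); rewrite [0 < y c0]ltNge yc orbF.
  by move=> xc /eqP; rewrite mulf_eq0 !gt_eqF.
have sup_B : exists c, (0 < w c) && (y c <= 0).
  case: (pickP (fun c => (0 < w c) && (y c <= 0))) => [c Hc|Hn]; first by exists c.
  have F0 c : 0 <= w c * y c.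
    have := w0 c; rewrite le_eqVlt => /orP[/eqP <-|wc]; first by rewrite mul0r.
    move: (Hn c); rewrite /= wc /= => /negbT; rewrite -ltNge => yc.
    by rewrite mulr_ge0 ?ltW.
  have := allz _ F0 Yle c0.
  move: (Hn c0); rewrite /= wc0 /= => /negbT; rewrite -ltNge => yc.
  by move=> /eqP; rewrite mulf_eq0 !gt_eqF.
case: sup_y => c1 /andP[wc1 yc1].
case: sup_B => q1 /andP[wq1 yq1].
set X := \sum_c w c * x c. set Y := \sum_c w c * y c.
pose D q c := x q * y c - x c * y q.
have inner q : \sum_c w c * D q c = x q * Y - y q * X.
  rewrite /D /X /Y mulr_sumr mulr_sumr -sumrB; apply: eq_bigr => c _.
  ring.
pose S := \sum_(q | y q <= 0) w q * \sum_c w c * D q c.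
have S_le : S <= 0.
  rewrite /S; apply: sumr_le0 => q yq; rewrite inner.
  have xq : 0 < x q by move: (noQ' q); rewrite [0 < y q]ltNge yq orbF.
  apply: mulr_ge0_le0; first exact: w0.
  have : x q * Y <= 0 by rewrite mulr_ge0_le0 // ltW.
  have : 0 <= y q * X by rewrite mulr_le0 .
  lra.
have S_split : S = \sum_(q | y q <= 0) \sum_(c | y c <= 0) w q * w c * D q c
   + \sum_(q | y q <= 0) \sum_(c | ~~ (y c <= 0)) w q * w c * D q c.
  rewrite /S -big_split /=; apply: eq_bigr => q _.
  rewrite (bigID (fun c => y c <= 0)) /= mulrDr !mulr_sumr.
  by congr (_ + _); apply: eq_bigr => c _; rewrite mulrA.
have S_in : \sum_(q | y q <= 0) \sum_(c | y c <= 0) w q * w c * D q c = 0.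
  set T := (X in X = 0).
  have : T = - T.
    rewrite {1}/T exchange_big /= /T -sumrN; apply: eq_bigr => q _.
    rewrite -sumrN; apply: eq_bigr => c _; rewrite /D; ring.
  lra.
have S_out : 0 < \sum_(q | y q <= 0) \sum_(c | ~~ (y c <= 0)) w q * w c * D q c.
  rewrite (bigD1 q1) //= (bigD1 c1) /=; last by rewrite -ltNge.
  have k1 : 0 < w q1 * w c1 * D q1 c1 by rewrite !mulr_gt0 // key.
  have k2 : 0 <= \sum_(i | ~~ (y i <= 0) && (i != c1)) w q1 * w i * D q1 i.
    apply: sumr_ge0 => c /andP[yc _]; rewrite mulr_ge0 ?mulr_ge0 ?w0 // ltW // key //.
    by rewrite ltNge.
  have k3 : 0 <= \sum_(i | (y i <= 0) && (i != q1)) \sum_(c | ~~ (y c <= 0)) w i * w c * D i c.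
    apply: sumr_ge0 => q /andP[yq _]; apply: sumr_ge0 => c yc.
    rewrite mulr_ge0 ?mulr_ge0 ?w0 // ltW // key //.
    by rewrite ltNge.
  lra.
lra.
Qed.

Lemma mix_total (R : realType) (X Y U : finType) (n k : nat)
  (W : word X n -> word Y n -> R) (Pu : U -> R)
  (phi : U -> 'I_(2 ^ k) -> word X n)
  (g : U -> word Y n -> option 'I_(2 ^ k)) :
  total_err W Pu phi g = \sum_u Pu u * Ttot R X Y n W (2 ^ k) (phi u) (g u).
Proof.
rewrite /total_err /Ttot.
under [RHS]eq_bigr do rewrite mulrCA mulr_sumr.
rewrite -mulr_sumr; congr (_ * _).
rewrite exchange_big /=; apply: eq_bigr => m _.
under [RHS]eq_bigr do rewrite mulr_sumr.
by rewrite exchange_big.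
Qed.

Lemma mix_undet (R : realType) (X Y U : finType) (n k : nat)
  (W : word X n -> word Y n -> R) (Pu : U -> R)
  (phi : U -> 'I_(2 ^ k) -> word X n)
  (g : U -> word Y n -> option 'I_(2 ^ k)) :
  undet_err W Pu phi g = \sum_u Pu u * Utot R X Y n W (2 ^ k) (phi u) (g u).
Proof.
rewrite /undet_err /Utot.
under [RHS]eq_bigr do rewrite mulrCA mulr_sumr.
rewrite -mulr_sumr; congr (_ * _).
rewrite exchange_big /=; apply: eq_bigr => m _.
under [RHS]eq_bigr do rewrite mulr_sumr.
by rewrite exchange_big.
Qed.

Theorem theorem1 (R : realType) (X Y : finType) (n k : nat)
  (W : word X n -> word Y n -> R) (Px : word X n -> R) (Delta : nat) :
  (1 <= n)%N -> is_channel W -> is_pmf Px ->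
  exists eT eU : R,
    is_code k W eT eU /\
    eT <= RCU W Px (k + Delta) /\
    eU <= RCU W Px (k + Delta) * (2 ^- Delta).
Proof.
move=> _ Wch Pxp.
pose N := (2 ^ (k + Delta))%N.
have KN : (2 ^ k <= N)%N by rewrite leq_pexp2l // leq_addr.
have Kpos : (0 < 2 ^ k)%N by rewrite expn_gt0.
pose a := RCU W Px (k + Delta).
pose b := a * 2 ^- Delta.
pose T := Tdet R X Y n N W (2 ^ k) KN.
pose U := Udet R X Y n N W (2 ^ k) KN.
have hQ := @ET_RCU R X Y n N W Px Wch Pxp (k + Delta) (erefl N).
have hT : \sum_c wgt R X n N Px c * T c <= a.
  by rewrite (@ET R X Y n N W Px Wch Pxp (2 ^ k) KN Kpos).
have hU : \sum_c wgt R X n N Px c * U c <= b.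
  rewrite (@EU R X Y n N W Px (2 ^ k) KN Kpos).
  have hV := @VQ_le R X Y n N W Px Wch Pxp (2 ^ k) KN Kpos.
  have V0 : 0 <= \sum_y Vy R X Y n N W Px y.
    by apply: sumr_ge0 => y _; apply: Vy_ge0.
  set V := \sum_y Vy R X Y n N W Px y in hV V0 *.
  set t := (2 : R) ^+ Delta.
  have t1 : 1 <= t by rewrite exprn_ege1 // ler1n.
  have tp : 0 < t by lra.
  have eN : (N%:R : R) = (2 ^ k)%:R * t by rewrite /N expnD natrM [X in _ * X]natrX.
  have h1 : (N%:R - 1) * V <= a by rewrite /a; lra.
  rewrite eN in h1.
  have ti : t^-1 <= 1 by rewrite invf_le1.
  have e : ((2 ^ k)%:R - 1) * V <= t^-1 * (((2 ^ k)%:R * t - 1) * V).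
    have -> : t^-1 * (((2 ^ k)%:R * t - 1) * V) = ((2 ^ k)%:R - t^-1) * V.
      by field; rewrite gt_eqF.
    apply: ler_wpM2r => //; lra.
  apply: (le_trans e); rewrite /b [X in _ <= X]mulrC; apply: ler_wpM2l => //.
  by rewrite invr_ge0 ltW.
have sw := @sum_wgt R X n N Px Pxp.
have hx0 : \sum_c wgt R X n N Px c * (T c - a) <= 0.
  under eq_bigr do rewrite mulrBr.
  by rewrite sumrB -mulr_suml sw mul1r subr_le0.
have hy0 : \sum_c wgt R X n N Px c * (U c - b) <= 0.
  under eq_bigr do rewrite mulrBr.
  by rewrite sumrB -mulr_suml sw mul1r subr_le0.
have [c1 [c2 [l [l01 [hx hy]]]]] :=
  @two_point R _ (wgt R X n N Px) (fun c => T c - a) (fun c => U c - b)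
    (@wgt_ge0 R X n N Px Pxp) sw hx0 hy0.
move/andP: l01 => [l0 l1].
exists (l * T c1 + (1 - l) * T c2), (l * U c1 + (1 - l) * U c2).
split; last first.
  have ex : l * (T c1 - a) + (1 - l) * (T c2 - a) = l * T c1 + (1 - l) * T c2 - a.
    by ring.
  have ey : l * (U c1 - b) + (1 - l) * (U c2 - b) = l * U c1 + (1 - l) * U c2 - b.
    by ring.
  rewrite ex in hx; rewrite ey in hy.
  split; first by rewrite -/a; lra.
  by rewrite -/a -/b; lra.
exists (bool : finType); split; first by rewrite card_bool.
exists (fun b : bool => if b then l else 1 - l); split.
  split; first by case => //; lra.
  by rewrite big_bool /= addrC subrK.
exists (fun b : bool => if b then (fun m => c1 (@wid N (2 ^ k) KN m)) else (fun m => c2 (@wid N (2 ^ k) KN m))).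
exists (fun b : bool => if b then gdec R X Y n N W (2 ^ k) KN c1
                        else gdec R X Y n N W (2 ^ k) KN c2).
rewrite mix_total mix_undet !big_bool /=.
by split; apply: lexx.
Qed.
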